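(* Let $\lambda,\mu\in P^+$ for $\mathfrak g$ of type $A_2$. Then there exists a bijection $\mathcal S^{A}_{\lambda,\mu}\to\mathcal T^{A}_{\lambda,\mu}$.
   Context: $m_i=\lambda(h_i)$, $n_i=\mu(h_i)$ ($i=1,2$) are non-negative integers. $\mathcal S^{A}_{\lambda,\mu}=\{(a,b,c)\in\mathbb Z_+^3: a\le\min\{m_1,n_1\},\ c\le\min\{m_2,n_2\},\ a+b+c\le\min\{m_1+m_2,n_1+n_2\},\ 2a+b\le m_1+n_1,\ 2c+b\le m_2+n_2\}$. $\mathcal T^{A}_{\lambda,\mu}=\{(a,b,c)\in\mathbb Z_+^3: b\le\min\{m_2,n_1\},\ a+b-c\le n_1,\ b+c-a\le m_2,\ c\le n_2,\ a\le m_1,\ 2a+b-c\le m_1+n_1,\ 2c+b-a\le m_2+n_2\}$. *)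

(* Defs.v *)
From mathcomp Require Import all_boot.
Set Implicit Arguments. Unset Strict Implicit. Unset Printing Implicit Defensive.

(* Type A_2: lambda, mu dominant weights, encoded by m_i = lambda(h_i),
   n_i = mu(h_i) (i = 1,2), arbitrary natural numbers.
   Triples (a,b,c) in Z_+^3 are encoded as nat * nat * nat. *)

Definition SA (m1 m2 n1 n2 : nat) (x : nat * nat * nat) : bool :=
  let: (a, b, c) := x in
  [&& a <= minn m1 n1, c <= minn m2 n2,
      a + b + c <= minn (m1 + m2) (n1 + n2),
      2 * a + b <= m1 + n1 & 2 * c + b <= m2 + n2].

(* Integer inequalities with subtraction are written with the subtracted
   terms moved to the other side (equivalent over Z, no truncation). *)
Definition TA (m1 m2 n1 n2 : nat) (x : nat * nat * nat) : bool :=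
  let: (a, b, c) := x in
  [&& b <= minn m2 n1,
      a + b <= n1 + c,
      b + c <= m2 + a,
      c <= n2, a <= m1,
      2 * a + b <= m1 + n1 + c
    & 2 * c + b <= m2 + n2 + a ].

(* Main.v *)
Require Import Defs.
From mathcomp Require Import all_boot.
From mathcomp Require Import zify.
From Stdlib Require Import ZArith Lia.

Local Open Scope Z_scope.
Definition loS (m1 m2 n1 n2 p q : Z) := Z.max 0 (Z.max (p - Z.min m1 n1) (Z.max (q - Z.min m2 n2) (Z.max (p+q - Z.min (m1+m2) (n1+n2)) (Z.max (2*p-m1-n1) (2*q-m2-n2))))).
Definition loT (m1 m2 n1 n2 p q : Z) := Z.max 0 (Z.max (q-n2) (Z.max (p-m1) (Z.max (2*p-q-m1-n1) (2*q-p-m2-n2)))).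
Definition hiT (m1 m2 n1 n2 p q : Z) := Z.min p (Z.min q (Z.min m2 (Z.min n1 (Z.min (n1+q-p) (m2+p-q))))).

Lemma ne m1 m2 n1 n2 p q : 0 <= m1 -> 0 <= m2 -> 0 <= n1 -> 0 <= n2 -> 0<=p -> 0<=q ->
  loT m1 m2 n1 n2 p q <= hiT m1 m2 n1 n2 p q -> loS m1 m2 n1 n2 p q <= Z.min p q.
Proof. unfold loS, loT, hiT. move=> ? ? ? ? ? ?.
 rewrite ?Z.max_lub_iff ?Z.min_glb_iff ?Z.max_lub_iff ?Z.min_glb_iff. lia. Qed.

Lemma keyiff m1 m2 n1 n2 p q t : 0 <= t -> 0 <= m1 -> 0 <= m2 -> 0 <= n1 -> 0 <= n2 -> 0<=p -> 0<=q ->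
  loS m1 m2 n1 n2 p q + t <= Z.min p q <-> loT m1 m2 n1 n2 p q + t <= hiT m1 m2 n1 n2 p q.
Proof. unfold loS, loT, hiT. intros.
 rewrite <- !Z.add_max_distr_r.
 repeat (rewrite ?Z.max_lub_iff; rewrite ?Z.min_glb_iff).
 lia. Qed.
Lemma key m1 m2 n1 n2 p q : 0 <= m1 -> 0 <= m2 -> 0 <= n1 -> 0 <= n2 -> 0<=p -> 0<=q ->
  loS m1 m2 n1 n2 p q <= Z.min p q ->
  Z.min p q - loS m1 m2 n1 n2 p q = hiT m1 m2 n1 n2 p q - loT m1 m2 n1 n2 p q.
Proof. intros.
 assert (A := proj1 (keyiff m1 m2 n1 n2 p q (Z.min p q - loS m1 m2 n1 n2 p q) ltac:(lia) H H0 H1 H2 H3 H4) ltac:(lia)).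
 assert (B := proj2 (keyiff m1 m2 n1 n2 p q (hiT m1 m2 n1 n2 p q - loT m1 m2 n1 n2 p q) ltac:(lia) H H0 H1 H2 H3 H4) ltac:(lia)).
 lia. Qed.

Local Close Scope Z_scope.

Lemma SA_iff m1 m2 n1 n2 a b c :
  SA m1 m2 n1 n2 (a,b,c) <->
  (loS (Z.of_nat m1) (Z.of_nat m2) (Z.of_nat n1) (Z.of_nat n2) (Z.of_nat a + Z.of_nat b) (Z.of_nat b + Z.of_nat c) <= Z.of_nat b)%Z.
Proof.
  rewrite /SA /loS. rewrite ?Z.max_lub_iff. split; intros; lia.
Qed.

Lemma TA_iff m1 m2 n1 n2 a b c :
  TA m1 m2 n1 n2 (a,b,c) <->
  (loT (Z.of_nat m1) (Z.of_nat m2) (Z.of_nat n1) (Z.of_nat n2) (Z.of_nat a + Z.of_nat b) (Z.of_nat b + Z.of_nat c) <= Z.of_nat b <=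
   hiT (Z.of_nat m1) (Z.of_nat m2) (Z.of_nat n1) (Z.of_nat n2) (Z.of_nat a + Z.of_nat b) (Z.of_nat b + Z.of_nat c))%Z.
Proof.
  rewrite /TA /loT /hiT. rewrite ?Z.max_lub_iff ?Z.min_glb_iff. split; intros; lia.
Qed.

Definition fST m1 m2 n1 n2 (x : nat * nat * nat) : nat * nat * nat :=
  let: (a, b, c) := x in
  let p := (Z.of_nat a + Z.of_nat b)%Z in let q := (Z.of_nat b + Z.of_nat c)%Z in
  let M1 := Z.of_nat m1 in let M2 := Z.of_nat m2 in let N1 := Z.of_nat n1 in let N2 := Z.of_nat n2 in
  let b' := (Z.of_nat b - loS M1 M2 N1 N2 p q + loT M1 M2 N1 N2 p q)%Z in
  (Z.to_nat (p - b'), Z.to_nat b', Z.to_nat (q - b')).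

Definition fTS m1 m2 n1 n2 (x : nat * nat * nat) : nat * nat * nat :=
  let: (a, b, c) := x in
  let p := (Z.of_nat a + Z.of_nat b)%Z in let q := (Z.of_nat b + Z.of_nat c)%Z in
  let M1 := Z.of_nat m1 in let M2 := Z.of_nat m2 in let N1 := Z.of_nat n1 in let N2 := Z.of_nat n2 in
  let b' := (Z.of_nat b - loT M1 M2 N1 N2 p q + loS M1 M2 N1 N2 p q)%Z in
  (Z.to_nat (p - b'), Z.to_nat b', Z.to_nat (q - b')).

Lemma fST_ok m1 m2 n1 n2 x : SA m1 m2 n1 n2 x ->
  TA m1 m2 n1 n2 (fST m1 m2 n1 n2 x) /\ fTS m1 m2 n1 n2 (fST m1 m2 n1 n2 x) = x.
Proof.
  case: x => [[a b] c] /SA_iff H.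
  set M1 := Z.of_nat m1 in H *. set M2 := Z.of_nat m2 in H *.
  set N1 := Z.of_nat n1 in H *. set N2 := Z.of_nat n2 in H *.
  set p := (Z.of_nat a + Z.of_nat b)%Z in H *.
  set q := (Z.of_nat b + Z.of_nat c)%Z in H *.
  have Hk := key M1 M2 N1 N2 p q.
  have H0 : (0 <= loT M1 M2 N1 N2 p q)%Z by rewrite /loT; lia.
  have H0' : (0 <= loS M1 M2 N1 N2 p q)%Z by rewrite /loS; lia.
  have Hk' : (Z.min p q - loS M1 M2 N1 N2 p q = hiT M1 M2 N1 N2 p q - loT M1 M2 N1 N2 p q)%Z by apply: Hk; lia.
  have Hh : (hiT M1 M2 N1 N2 p q <= Z.min p q)%Z by rewrite /hiT; lia.
  rewrite /fST -/M1 -/M2 -/N1 -/N2 -/p -/q.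
  set b' := (Z.of_nat b - _ + _)%Z.
  have Ep : (Z.of_nat (Z.to_nat (p - b')) + Z.of_nat (Z.to_nat b') = p)%Z by lia.
  have Eq : (Z.of_nat (Z.to_nat b') + Z.of_nat (Z.to_nat (q - b')) = q)%Z by lia.
  split.
  - apply/TA_iff. rewrite Ep Eq -/M1 -/M2 -/N1 -/N2. lia.
  - rewrite /fTS Ep Eq -/M1 -/M2 -/N1 -/N2.
    have -> : (Z.of_nat (Z.to_nat b') - loT M1 M2 N1 N2 p q + loS M1 M2 N1 N2 p q = Z.of_nat b)%Z by lia.
    rewrite Nat2Z.id. congr (_, _, _); lia.
Qed.

Lemma fTS_ok m1 m2 n1 n2 x : TA m1 m2 n1 n2 x ->
  SA m1 m2 n1 n2 (fTS m1 m2 n1 n2 x) /\ fST m1 m2 n1 n2 (fTS m1 m2 n1 n2 x) = x.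
Proof.
  case: x => [[a b] c] /TA_iff H.
  set M1 := Z.of_nat m1 in H *. set M2 := Z.of_nat m2 in H *.
  set N1 := Z.of_nat n1 in H *. set N2 := Z.of_nat n2 in H *.
  set p := (Z.of_nat a + Z.of_nat b)%Z in H *.
  set q := (Z.of_nat b + Z.of_nat c)%Z in H *.
  have Hn := ne M1 M2 N1 N2 p q.
  have Hk := key M1 M2 N1 N2 p q.
  have H0 : (0 <= loT M1 M2 N1 N2 p q)%Z by rewrite /loT; lia.
  have H0' : (0 <= loS M1 M2 N1 N2 p q)%Z by rewrite /loS; lia.
  have Hn' : (loS M1 M2 N1 N2 p q <= Z.min p q)%Z by apply: Hn; lia.
  have Hk' : (Z.min p q - loS M1 M2 N1 N2 p q = hiT M1 M2 N1 N2 p q - loT M1 M2 N1 N2 p q)%Z by apply: Hk; lia.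
  have Hh : (hiT M1 M2 N1 N2 p q <= Z.min p q)%Z by rewrite /hiT; lia.
  rewrite /fTS -/M1 -/M2 -/N1 -/N2 -/p -/q.
  set b' := (Z.of_nat b - _ + _)%Z.
  have Ep : (Z.of_nat (Z.to_nat (p - b')) + Z.of_nat (Z.to_nat b') = p)%Z by lia.
  have Eq : (Z.of_nat (Z.to_nat b') + Z.of_nat (Z.to_nat (q - b')) = q)%Z by lia.
  split.
  - apply/SA_iff. rewrite Ep Eq -/M1 -/M2 -/N1 -/N2. lia.
  - rewrite /fST Ep Eq -/M1 -/M2 -/N1 -/N2.
    have -> : (Z.of_nat (Z.to_nat b') - loS M1 M2 N1 N2 p q + loT M1 M2 N1 N2 p q = Z.of_nat b)%Z by lia.
    rewrite Nat2Z.id. congr (_, _, _); lia.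
Qed.

Theorem lemma4p2 (m1 m2 n1 n2 : nat) :
  exists f : {x : nat * nat * nat | SA m1 m2 n1 n2 x} ->
             {x : nat * nat * nat | TA m1 m2 n1 n2 x},
    bijective f.
Proof.
  pose f (x : {x : nat * nat * nat | SA m1 m2 n1 n2 x}) : {x : nat * nat * nat | TA m1 m2 n1 n2 x} :=
    exist _ (fST m1 m2 n1 n2 (sval x)) (proj1 (@fST_ok m1 m2 n1 n2 _ (proj2_sig x))).
  pose g (x : {x : nat * nat * nat | TA m1 m2 n1 n2 x}) : {x : nat * nat * nat | SA m1 m2 n1 n2 x} :=
    exist _ (fTS m1 m2 n1 n2 (sval x)) (proj1 (@fTS_ok m1 m2 n1 n2 _ (proj2_sig x))).
  exists f; exists g.
  - case=> x Hx; apply: val_inj => /=. exact: (proj2 (@fST_ok m1 m2 n1 n2 _ Hx)).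
  - case=> x Hx; apply: val_inj => /=. exact: (proj2 (@fTS_ok m1 m2 n1 n2 _ Hx)).
Qed.
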